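(* Let $\mu\in\mathcal{L}$ and let $\alpha\neq\beta$ be atoms of $\mu$. Then \[ \min\big(\mu(\{\alpha\}),\mu(\{\beta\})\big)<\frac{2\pi}{|\alpha-\beta|}. \]
   Context: For a probability measure $\mu$ on $\mathbb{R}$, $G_\mu(z)=\int\frac{d\mu(x)}{z-x}$ and $F_\mu=1/G_\mu$ on the upper half-plane $\mathbb{C}^+$. $\mathcal{L}$ is the set of probability measures $\mu$ on $\mathbb{R}$ with $F_\mu(z+2\pi)=F_\mu(z)+2\pi$ for all $z\in\mathbb{C}^+$. *)

(* Defs.v *)
From mathcomp Require Import all_boot all_order all_algebra.
From mathcomp Require Import all_classical all_reals all_analysis.
From mathcomp Require Export complex.
Import GRing.Theory Num.Theory.
Local Open Scope ring_scope.

Definition cintegral {R : realType} (mu : probability R R) (f : R -> R[i]) : R[i] :=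
  Complex (Rintegral mu setT (fun x => complex.Re (f x)))
          (Rintegral mu setT (fun x => complex.Im (f x))).

Definition Gmu {R : realType} (mu : probability R R) (z : R[i]) : R[i] :=
  cintegral mu (fun x => (z - Complex x 0)^-1).

Definition Fmu {R : realType} (mu : probability R R) (z : R[i]) : R[i] :=
  (Gmu mu z)^-1.

Definition in_L {R : realType} (mu : probability R R) : Prop :=
  forall z : R[i], 0 < complex.Im z ->
    Fmu mu (z + Complex (2 * pi) 0) = Fmu mu z + Complex (2 * pi) 0.

(* Main.v *)
Require Import Defs.
From mathcomp Require Import all_boot all_order all_algebra.
From mathcomp Require Import all_classical all_reals all_analysis.
From mathcomp Require Import measurable_realfun.
From mathcomp Require Import ring lra.
Import Order.TTheory GRing.Theory Num.Theory.
Import numFieldNormedType.Exports.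
Local Open Scope ring_scope.

Definition ratf {R : realType} (a y c1 c2 : R) (x : R) : R :=
  (c1 * (a - x) + c2) / ((a - x) * (a - x) + y * y).

Lemma ratf_den_gt0 {R : realType} (a y x : R) : 0 < y -> 0 < (a - x) * (a - x) + y * y.
Proof. by move=> hy; apply: ltr_wpDl; [rewrite -expr2 sqr_ge0 | rewrite mulr_gt0]. Qed.

Lemma ratf_cont {R : realType} (a y c1 c2 : R) : 0 < y -> continuous (ratf a y c1 c2).
Proof.
move=> hy x; rewrite /ratf.
apply: (continuousM (s:=fun x => c1 * (a - x) + c2) (t:=fun x => ((a - x) * (a - x) + y * y)^-1)).
  apply: (continuousD (f:=fun x => c1 * (a - x)) (g:=fun _ => c2)); last exact: cst_continuous.
  apply: (continuousM (s:=fun _ => c1) (t:=fun x => a - x)); first exact: cst_continuous.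
  apply: (continuousB (f:=fun _ => a) (g:=id)); first exact: cst_continuous.
  exact: cvg_id.
apply: continuousV; first by rewrite /= lt0r_neq0 // ratf_den_gt0.
apply: (continuousD (f:=fun x => (a - x) * (a - x)) (g:=fun _ => y * y)); last exact: cst_continuous.
apply: (continuousM (s:=fun x => a - x) (t:=fun x => a - x)); apply: (continuousB (f:=fun _ => a) (g:=id)); (exact: cst_continuous) || exact: cvg_id.
Qed.

Lemma ratf_bound_re {R : realType} (a y x : R) : 0 < y ->
  `|ratf a y 1 0 x| <= y^-1.
Proof.
move=> hy; rewrite /ratf mul1r addr0.
have hD := (@ratf_den_gt0 _ a y x hy).
rewrite ler_norml; apply/andP; split.
  rewrite ler_pdivlMr // mulNr lerNl ler_pdivlMl //.
  have := sqr_ge0 (a - x + y); rewrite expr2; nra.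
rewrite ler_pdivrMr // ler_pdivlMl //.
have := sqr_ge0 (a - x - y); rewrite expr2; nra.
Qed.

Lemma ratf_bound_im {R : realType} (a y x : R) : 0 < y ->
  `|ratf a y 0 (- y) x| <= y^-1.
Proof.
move=> hy; rewrite /ratf mul0r add0r.
have hD := (@ratf_den_gt0 _ a y x hy).
rewrite ler_norml; apply/andP; split.
  rewrite ler_pdivlMr // mulNr lerNl opprK ler_pdivlMl //.
  have := sqr_ge0 (a - x); rewrite expr2; nra.
rewrite ler_pdivrMr // ler_pdivlMl //.
have := sqr_ge0 (a - x); rewrite expr2; nra.
Qed.

Lemma ratf_int {R : realType} (mu : probability R R) (a y c1 c2 : R) : 0 < y ->
  (forall x, `|ratf a y c1 c2 x| <= y^-1) ->
  mu.-integrable setT (EFin \o ratf a y c1 c2).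
Proof.
move=> hy hb; apply: measurable_bounded_integrable => //.
- by rewrite -ge0_fin_numE // fin_num_measure.
- by apply: continuous_measurable_fun; exact: ratf_cont.
- rewrite /bounded_near; near=> M => t _ /=.
  apply: (le_trans (hb t)). near: M. by apply: nbhs_pinfty_ge; rewrite num_real.
Unshelve. all: end_near.
Qed.

Definition ure {R : realType} (z : R[i]) (x : R) : R := complex.Re ((z - Complex x 0)^-1).
Definition uim {R : realType} (z : R[i]) (x : R) : R := complex.Im ((z - Complex x 0)^-1).

Lemma ureE {R : realType} (z : R[i]) x : ure z x = ratf (complex.Re z) (complex.Im z) 1 0 x.
Proof. case: z => a y; rewrite /ure /ratf /= subr0 !expr2 mul1r addr0 //. Qed.
Lemma uimE {R : realType} (z : R[i]) x : uim z x = ratf (complex.Re z) (complex.Im z) 0 (- complex.Im z) x.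
Proof. case: z => a y; rewrite /uim /ratf /= subr0 !expr2 mul0r add0r mulNr //. Qed.

Lemma ure_int {R : realType} (mu : probability R R) (z : R[i]) : 0 < complex.Im z ->
  mu.-integrable setT (EFin \o ure z).
Proof.
move=> hy; rewrite (_ : ure z = ratf (complex.Re z) (complex.Im z) 1 0); last first.
  by apply/funext => x; rewrite ureE.
by apply: ratf_int => // x; apply: ratf_bound_re.
Qed.
Lemma uim_int {R : realType} (mu : probability R R) (z : R[i]) : 0 < complex.Im z ->
  mu.-integrable setT (EFin \o uim z).
Proof.
move=> hy; rewrite (_ : uim z = ratf (complex.Re z) (complex.Im z) 0 (- complex.Im z)); last first.
  by apply/funext => x; rewrite uimE.
by apply: ratf_int => // x; apply: ratf_bound_im.
Qed.

Lemma GmuE {R : realType} (mu : probability R R) z :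
  Gmu mu z = Complex (\int[mu]_x ure z x) (\int[mu]_x uim z x).
Proof. by []. Qed.

Lemma RintD {R : realType} (mu : probability R R) (f g : R -> R) :
  mu.-integrable setT (EFin \o f) -> mu.-integrable setT (EFin \o g) ->
  mu.-integrable setT (EFin \o (fun x => f x + g x)).
Proof.
move=> hf hg; apply: (eq_integrable measurableT _ _ _ (integrableD measurableT hf hg)).
by move=> x _ /=; rewrite EFinD.
Qed.

Lemma RintZ {R : realType} (mu : probability R R) (k : R) (f : R -> R) :
  mu.-integrable setT (EFin \o f) ->
  mu.-integrable setT (EFin \o (fun x => k * f x)).
Proof.
move=> hf; apply: (eq_integrable measurableT _ _ _ (integrableZl measurableT k hf)).
by move=> x _ /=; rewrite EFinM.
Qed.

Lemma Rint_cst1 {R : realType} (mu : probability R R) (k : R) :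
  \int[mu]_(x in setT) k = k.
Proof.
rewrite Rintegral_cst // (_ : fine _ = 1) ?mulr1 //.
exact: (f_equal fine (probability_setT mu)).
Qed.

Lemma int_lin {R : realType} (mu : probability R R) (f1 f2 f3 f4 : R -> R)
  (k0 k1 k2 k3 k4 : R) :
  mu.-integrable setT (EFin \o f1) -> mu.-integrable setT (EFin \o f2) ->
  mu.-integrable setT (EFin \o f3) -> mu.-integrable setT (EFin \o f4) ->
  \int[mu]_x (k0 + k1 * f1 x + k2 * f2 x + k3 * f3 x + k4 * f4 x) =
  k0 + k1 * (\int[mu]_x f1 x) + k2 * (\int[mu]_x f2 x) + k3 * (\int[mu]_x f3 x)
     + k4 * (\int[mu]_x f4 x).
Proof.
move=> i1 i2 i3 i4.
have i0 : mu.-integrable setT (EFin \o (fun _ : R => k0)).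
  exact: finite_measure_integrable_cst.
rewrite RintegralD //; last exact: RintZ.
2: by apply: RintD; [apply: RintD; [apply: RintD|]|]; (exact: RintZ) || exact: i0.
rewrite RintegralD //; last exact: RintZ.
2: by apply: RintD; [apply: RintD|]; (exact: RintZ) || exact: i0.
rewrite RintegralD //; last exact: RintZ.
2: by apply: RintD; (exact: RintZ) || exact: i0.
rewrite RintegralD //; last exact: RintZ.
rewrite !RintegralZl // Rint_cst1 //.
Qed.

Lemma cnz {R : realType} (w : R[i]) : complex.Im w != 0 -> w != 0.
Proof. case: w => a b /= hb; apply/eqP => -[] _ hb0; by rewrite hb0 eqxx in hb. Qed.

Lemma conjV {R : realType} (w : R[i]) : (w^-1)^* = (w^*)^-1.
Proof. by rewrite fmorphV. Qed.

Definition Lin {R : realType} (z1 z2 c1 c2 m U1 U2 : R[i]) : R[i] :=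
  c1 * c1^* * (U1 - U1^*) / (z1^* - z1) + c2 * c2^* * (U2 - U2^*) / (z2^* - z2)
  + c1 * c2^* * (U1 - U2^*) / (z2^* - z1) + c2 * c1^* * (U2 - U1^*) / (z1^* - z2)
  - m^* * (c1 * U1 + c2 * U2) - m * (c1^* * U1^* + c2^* * U2^*) + m * m^*.

Lemma Lin_aff {R : realType} (z1 z2 c1 c2 m U1 U2 : R[i]) :
  Lin z1 z2 c1 c2 m U1 U2 = m * m^*
   + (c1 * c1^* / (z1^* - z1) + c1 * c2^* / (z2^* - z1) - m^* * c1) * U1
   + (- (c1 * c1^* / (z1^* - z1)) - c2 * c1^* / (z1^* - z2) - m * c1^*) * U1^*
   + (c2 * c2^* / (z2^* - z2) + c2 * c1^* / (z1^* - z2) - m^* * c2) * U2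
   + (- (c2 * c2^* / (z2^* - z2)) - c1 * c2^* / (z2^* - z1) - m * c2^*) * U2^*.
Proof. rewrite /Lin; ring. Qed.

Lemma re_aff {R : realType} (K A1 B1 A2 B2 U1 U2 : R[i]) :
  complex.Re (K + A1 * U1 + B1 * U1^* + A2 * U2 + B2 * U2^*) =
  complex.Re K + (complex.Re A1 + complex.Re B1) * complex.Re U1
  + (complex.Im B1 - complex.Im A1) * complex.Im U1
  + (complex.Re A2 + complex.Re B2) * complex.Re U2
  + (complex.Im B2 - complex.Im A2) * complex.Im U2.
Proof.
case: K => ? ?; case: A1 => ? ?; case: B1 => ? ?; case: A2 => ? ?; case: B2 => ? ?.
case: U1 => ? ?; case: U2 => ? ? /=; ring.
Qed.

Lemma re_mulconj {R : realType} (w : R[i]) : 0 <= complex.Re (w * w^*).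
Proof. case: w => a b /=; nra. Qed.

Lemma conjsub {R : realType} (z : R[i]) (x : R) : (z - Complex x 0)^* = z^* - Complex x 0.
Proof.
rewrite rmorphB; congr (_ - _); apply/eqP; rewrite eq_complex /=.
by rewrite oppr0 !eqxx.
Qed.

Lemma Lin_pw {R : realType} (z1 z2 c1 c2 m : R[i]) (x : R) :
  0 < complex.Im z1 -> 0 < complex.Im z2 ->
  Lin z1 z2 c1 c2 m (z1 - Complex x 0)^-1 (z2 - Complex x 0)^-1 =
  (c1 * (z1 - Complex x 0)^-1 + c2 * (z2 - Complex x 0)^-1 - m) *
  (c1^* * (z1^* - Complex x 0)^-1 + c2^* * (z2^* - Complex x 0)^-1 - m^*).
Proof.
move=> h1 h2; rewrite /Lin !conjV !conjsub.
have n1 : z1 - Complex x 0 != 0 by clear -h1 h2; apply: cnz; case: z1 h1 => a b /= h; rewrite subr0 lt0r_neq0.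
have n2 : z2 - Complex x 0 != 0 by clear -h1 h2; apply: cnz; case: z2 h2 => a b /= h; rewrite subr0 lt0r_neq0.
have n3 : z1^* - Complex x 0 != 0.
  by clear -h1 h2; apply: cnz; case: z1 h1 => a b /= h; rewrite subr0 oppr_eq0 lt0r_neq0.
have n4 : z2^* - Complex x 0 != 0.
  by clear -h1 h2; apply: cnz; case: z2 h2 => a b /= h; rewrite subr0 oppr_eq0 lt0r_neq0.
have n5 : z1^* - z1 != 0.
  clear -h1 h2; apply: cnz; case: z1 h1 => a b /= h; rewrite -opprD oppr_eq0 lt0r_neq0 //; exact: addr_gt0.
have n6 : z2^* - z2 != 0.
  clear -h1 h2; apply: cnz; case: z2 h2 => a b /= h; rewrite -opprD oppr_eq0 lt0r_neq0 //; exact: addr_gt0.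
have n7 : z2^* - z1 != 0.
  clear -h1 h2; apply: cnz; case: z1 h1 => a b /= h; case: z2 h2 => a' b' /= h'.
  rewrite -opprD oppr_eq0 lt0r_neq0 //; exact: addr_gt0.
have n8 : z1^* - z2 != 0.
  clear -h1 h2; apply: cnz; case: z1 h1 => a b /= h; case: z2 h2 => a' b' /= h'.
  rewrite -opprD oppr_eq0 lt0r_neq0 //; exact: addr_gt0.
field.
by rewrite n1 n2 n3 n4 n5 n6 n7 n8.
Qed.

Lemma re_pw {R : realType} (z1 z2 c1 c2 m : R[i]) (x : R) :
  0 < complex.Im z1 -> 0 < complex.Im z2 ->
  0 <= complex.Re (Lin z1 z2 c1 c2 m (z1 - Complex x 0)^-1 (z2 - Complex x 0)^-1).
Proof.
move=> h1 h2; rewrite Lin_pw //.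
have -> : c1^* * (z1^* - Complex x 0)^-1 + c2^* * (z2^* - Complex x 0)^-1 - m^*
  = (c1 * (z1 - Complex x 0)^-1 + c2 * (z2 - Complex x 0)^-1 - m)^*.
  by rewrite -!conjsub -!conjV !rmorphB !rmorphD !rmorphM.
exact: re_mulconj.
Qed.

Lemma var_ge0 {R : realType} (mu : probability R R) (z1 z2 c1 c2 m : R[i]) :
  0 < complex.Im z1 -> 0 < complex.Im z2 ->
  0 <= complex.Re (Lin z1 z2 c1 c2 m (Gmu mu z1) (Gmu mu z2)).
Proof.
move=> h1 h2; rewrite Lin_aff re_aff !GmuE /=.
rewrite -int_lin; try (apply: ure_int || apply: uim_int); try done.
apply: Rintegral_ge0 => x _.
have := re_pw z1 z2 c1 c2 m x h1 h2; rewrite Lin_aff re_aff.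
by rewrite /ure /uim.
Qed.

Lemma cjM {R : realType} (a b : R[i]) : (a * b)^* = a^* * b^*. Proof. exact: rmorphM. Qed.
Lemma cjD {R : realType} (a b : R[i]) : (a + b)^* = a^* + b^*. Proof. exact: rmorphD. Qed.
Lemma cjB {R : realType} (a b : R[i]) : (a - b)^* = a^* - b^*. Proof. exact: rmorphB. Qed.
Lemma cj1 {R : realType} : (1 : R[i])^* = 1. Proof. exact: rmorph1. Qed.
Lemma cjK {R : realType} (a : R[i]) : a^*^* = a. Proof. exact: conjCK. Qed.

Lemma Lin_spec {R : realType} (z1 z2 F1 F2 kC : R[i]) :
  F1 != 0 -> F2 != 0 -> z1^* - z1 != 0 -> z2^* - z2 != 0 ->
  z2^* - z1 != 0 -> z1^* - z2 != 0 ->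
  Lin z1 z2 F1 ((kC^* * (z1^* - z2)) * F2) (1 + kC^* * (z1^* - z2)) F1^-1 F2^-1 =
  (F1^* - F1) / (z1^* - z1)
  + (kC * (z1 - z2^*)) * (kC^* * (z1^* - z2)) * (F2^* - F2) / (z2^* - z2)
  - kC * (F2^* - F1) + kC^* * (F1^* - F2)
  - (1 + kC * (z1 - z2^*)) * (1 + kC^* * (z1^* - z2)).
Proof.
move=> n1 n2 n5 n6 n7 n8.
have n3 : F1^* != 0 by rewrite conjC_eq0.
have n4 : F2^* != 0 by rewrite conjC_eq0.
rewrite /Lin !conjV !cjD !cjM !cjB !cj1 !cjK.
field.
by rewrite n1 n2 n3 n4 n5 n6 n7 n8.
Qed.

Lemma re_spec {R : realType} (s t y k p1 q1 p2 q2 : R) : 0 < y ->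
  complex.Re (((Complex p1 q1)^* - Complex p1 q1) / ((Complex s y)^* - Complex s y)
  + (Complex k 0 * (Complex s y - (Complex t y)^*)) * ((Complex k 0)^* * ((Complex s y)^* - Complex t y))
      * ((Complex p2 q2)^* - Complex p2 q2) / ((Complex t y)^* - Complex t y)
  - Complex k 0 * ((Complex p2 q2)^* - Complex p1 q1) + (Complex k 0)^* * ((Complex p1 q1)^* - Complex p2 q2)
  - (1 + Complex k 0 * (Complex s y - (Complex t y)^*)) * (1 + (Complex k 0)^* * ((Complex s y)^* - Complex t y))) =
  q1 / y + k ^+ 2 * ((s - t) ^+ 2 + 4 * y ^+ 2) * (q2 / y - 1) + 2 * k * (p1 - p2)
  - 1 - 2 * k * (s - t).
Proof.
move=> hy /=.
have hy0 : y != 0 by rewrite lt0r_neq0.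
field.
have h2 : - y - y != 0 by rewrite -opprD oppr_eq0 lt0r_neq0 // addr_gt0.
by rewrite hy0 /= subrr expr2 mul0r add0r mulf_neq0.
Qed.

Lemma Rint_indic1 {R : realType} (mu : probability R R) (s : R) :
  \int[mu]_x (\1_[set s]%classic x : R) = fine (mu [set s]%classic).
Proof.
rewrite /Rintegral integral_indic ?setIT //.
Qed.

Lemma atom_bound {R : realType} (mu : probability R R) (s y : R) : 0 < y ->
  \int[mu]_x uim (Complex s y) x <= - y^-1 * fine (mu [set s]%classic).
Proof.
move=> hy.
rewrite -Rint_indic1 -RintegralZl //; last first.
  apply: (eq_integrable measurableT _ _ _ (integrable_indic mu (measurable_set1 s))).
  by [].
apply: le_Rintegral => //.
- exact: uim_int.
- apply: RintZ; exact: (integrable_indic mu (measurable_set1 s)).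
move=> x _; rewrite uimE /= /ratf mul0r add0r.
have hD := (@ratf_den_gt0 _ s y x hy).
have [->|hne] := eqVneq x s.
  rewrite indicE mem_set // mulr1 subrr mul0r add0r.
  by rewrite invfM mulNr mulrA divff ?mul1r // lt0r_neq0.
rewrite indicE memNset ?mulr0; last by move=> /= h; rewrite h eqxx in hne.
rewrite mulNr oppr_le0 divr_ge0 //; exact: ltW.
Qed.

Lemma inv_bounds {R : realType} (g1 g2 b : R) : 0 < b -> g2 <= - b ->
  complex.Re ((Complex g1 g2)^-1) <= b^-1 /\ - b^-1 <= complex.Re ((Complex g1 g2)^-1) /\
  complex.Im ((Complex g1 g2)^-1) <= b^-1 /\ 0 < complex.Im ((Complex g1 g2)^-1).
Proof.
move=> hb hg /=.
have hN : 0 < g1 ^+ 2 + g2 ^+ 2 by rewrite !expr2; nra.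
have hb2 : b * b <= g2 * g2 by nra.
have s1 := sqr_ge0 (g1 - b); have s2 := sqr_ge0 (g1 + b); rewrite !expr2 in s1 s2.
split; [|split; [|split]].
- rewrite ler_pdivrMr // ler_pdivlMl //; rewrite !expr2; nra.
- rewrite ler_pdivlMr // mulNr lerNl ler_pdivlMl //; rewrite !expr2; nra.
- rewrite -mulNr ler_pdivrMr // ler_pdivlMl //; rewrite !expr2; nra.
- rewrite -mulNr divr_gt0 // oppr_gt0; apply: (le_lt_trans hg); rewrite oppr_lt0 //.
Qed.

Lemma Fmu_shift_gen {R : realType} (mu : probability R R) (c : R)
  (hL : forall z : R[i], 0 < complex.Im z -> Fmu mu (z + Complex c 0) = Fmu mu z + Complex c 0)
  (z : R[i]) (n : nat) :
  0 < complex.Im z ->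
  Fmu mu (z + Complex (c * n%:R) 0) = Fmu mu z + Complex (c * n%:R) 0.
Proof.
move=> hz; elim: n => [|n IH].
  have -> : Complex (c * (0%:R : R)) 0 = 0 by apply/eqP; rewrite eq_complex /= mulr0 !eqxx.
  by rewrite !addr0.
have -> : Complex (c * (n.+1%:R : R)) 0 = Complex (c * n%:R) 0 + Complex c 0.
  by apply/eqP; rewrite eq_complex /= addr0 mulrSr mulrDr mulr1 !eqxx.
rewrite !addrA hL ?IH //.
by move: hz; clear; case: z => a b /=; rewrite addr0.
Qed.

Lemma Fmu_shift {R : realType} (mu : probability R R) (hL : in_L mu) (z : R[i]) (n : nat) :
  0 < complex.Im z ->
  Fmu mu (z + Complex (2 * pi * n%:R) 0) = Fmu mu z + Complex (2 * pi * n%:R) 0.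
Proof. exact: Fmu_shift_gen. Qed.

Lemma final_arith {R : realType} (p d ms mt q1 p1 q2 pt c e : R) :
  0 < p -> 2 * p <= d -> 2 * p / d <= ms -> 2 * p / d <= mt ->
  q1 <= (p / 4) / ms -> - ((p / 4) / ms) <= p1 ->
  q2 <= (p / 4) / mt -> pt <= (p / 4) / mt ->
  e = c - d -> e ^+ 2 <= p ^+ 2 ->
  0 <= q1 / (p / 4) + (- p^-1) ^+ 2 * (e ^+ 2 + 4 * (p / 4) ^+ 2) * (q2 / (p / 4) - 1)
       + 2 * (- p^-1) * (p1 - (pt - c)) - 1 - 2 * (- p^-1) * e -> False.
Proof.
move=> hp hd hms hmt hq1 hp1 hq2 hpt he he2 H.
have hd0 : 0 < d by apply: lt_le_trans hd; rewrite mulr_gt0.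
set r := d / (2 * p).
have h2p : 0 < 2 * p by rewrite mulr_gt0.
have hr1 : 1 <= r by rewrite /r ler_pdivlMr // mul1r.
have hms0 : 0 < ms by apply: lt_le_trans hms; rewrite divr_gt0.
have hmt0 : 0 < mt by apply: lt_le_trans hmt; rewrite divr_gt0.
have ims : ms^-1 <= r.
  rewrite /r -[d / _]invf_div lef_pV2 ?posrE ?divr_gt0 //.
have imt : mt^-1 <= r.
  rewrite /r -[d / _]invf_div lef_pV2 ?posrE ?divr_gt0 //.
have hy : 0 < p / 4 by rewrite divr_gt0.
have a1 : q1 / (p / 4) <= r.
  rewrite ler_pdivrMr //; apply: (le_trans hq1); rewrite [r * _]mulrC ler_pM2l //.
have a2 : q2 / (p / 4) <= r.
  rewrite ler_pdivrMr //; apply: (le_trans hq2); rewrite [r * _]mulrC ler_pM2l //.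
have a3 : - ((p / 4) * r) <= p1.
  apply: le_trans hp1; rewrite lerN2 ler_pM2l //.
have a4 : pt <= (p / 4) * r.
  apply: (le_trans hpt); rewrite ler_pM2l //.
set W := (- p^-1) ^+ 2 * (e ^+ 2 + 4 * (p / 4) ^+ 2).
have hW0 : 0 <= W by rewrite /W mulr_ge0 // ?sqr_ge0 // addr_ge0 // ?sqr_ge0 // mulr_ge0 // sqr_ge0.
have hW1 : W <= 5 / 4.
  rewrite /W sqrrN exprVn ler_pdivrMl ?exprn_gt0 //.
  have -> : 4 * (p / 4) ^+ 2 = p ^+ 2 / 4 by rewrite expr_div_n; field.
  lra.
have b1 : W * (q2 / (p / 4) - 1) <= W * (r - 1) by rewrite ler_wpM2l // lerB.
have b2 : W * (r - 1) <= 5 / 4 * (r - 1) by rewrite ler_wpM2r // subr_ge0.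
have hdr : d = 2 * p * r by rewrite /r mulrC divfK // lt0r_neq0.
have L : 2 * (- p^-1) * (p1 - (pt - c)) - 2 * (- p^-1) * e <= - 3 * r.
  rewrite he -mulrBr.
  have -> : p1 - (pt - c) - (c - d) = p1 - pt + d by ring.
  have hX : 3 / 2 * p * r <= p1 - pt + d by rewrite hdr; lra.
  rewrite !mulrN !mulNr lerN2 -subr_ge0.
  have -> : 2 / p * (p1 - pt + d) - 3 * r = p^-1 * (2 * (p1 - pt + d) - 3 * p * r).
    by field; rewrite lt0r_neq0.
  by apply: mulr_ge0; [rewrite invr_ge0 ltW | lra].
have H' : 0 <= q1 / (p / 4) + W * (q2 / (p / 4) - 1)
   + 2 * (- p^-1) * (p1 - (pt - c)) - 1 - 2 * (- p^-1) * e := H.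
clear -H' a1 b1 b2 L hr1.
lra.
Qed.

Lemma Re_subC {R : realType} (a : R[i]) (c : R) : complex.Re (a - Complex c 0) = complex.Re a - c.
Proof. by case: a. Qed.
Lemma Im_subC {R : realType} (a : R[i]) (c : R) : complex.Im (a - Complex c 0) = complex.Im a.
Proof. by case: a => x y /=; rewrite oppr0 addr0. Qed.

Lemma cdiff_nz {R : realType} (a b y : R) : 0 < y -> (Complex a y)^* - Complex b y != 0.
Proof.
move=> hy; apply: cnz => /=; rewrite -opprD oppr_eq0 lt0r_neq0 //; exact: addr_gt0.
Qed.

Lemma ceta {R : realType} (a : R[i]) : a = Complex (complex.Re a) (complex.Im a).
Proof. by case: a. Qed.

Lemma half_id {R : realType} (d p : R) : 0 < p -> 2 * p * (d / (2 * p) + 2^-1) = d + p.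
Proof. by move=> hp; field; rewrite lt0r_neq0. Qed.

Lemma ngen {R : realType} (p : R) (n : nat) : p * n.+1%:R = p * n%:R + p.
Proof. by rewrite -addn1 natrD mulrDr mulr1. Qed.

Lemma main_aux {R : realType} (mu : probability R R) (hL : in_L mu) (s t : R) :
  s < t -> (0 < mu [set s]%classic)%E -> (0 < mu [set t]%classic)%E ->
  (mine (mu [set s]%classic) (mu [set t]%classic) < ((2 * pi) / `|s - t|)%:E)%E.
Proof.
move=> hst hs ht.
have fs : mu [set s]%classic = (fine (mu [set s]%classic))%:E.
  by rewrite fineK // fin_num_measure // measurable_set1.
have ft : mu [set t]%classic = (fine (mu [set t]%classic))%:E.
  by rewrite fineK // fin_num_measure // measurable_set1.
set ms := fine (mu [set s]%classic) in fs *.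
set mt := fine (mu [set t]%classic) in ft *.
have ms0 : 0 < ms by rewrite -lte_fin -fs.
have mt0 : 0 < mt by rewrite -lte_fin -ft.
have ms1 : ms <= 1.
  by rewrite -lee_fin -fs; apply: probability_le1; exact: measurable_set1.
rewrite fs ft -EFin_min lte_fin distrC gtr0_norm ?subr_gt0 //.
set d := t - s.
have hd0 : 0 < d by rewrite subr_gt0.
have hp : 0 < pi := pi_gt0 R.
rewrite ltNge; apply/negP; rewrite le_min => /andP[hms hmt].
have h2p : 0 < 2 * (pi : R) by apply: mulr_gt0.
have [hdlt|hdge] := ltP d (2 * pi).
  have h1 : 1 < 2 * pi / d by rewrite ltr_pdivlMr // mul1r.
  by have := lt_le_trans h1 hms; rewrite ltNge ms1.
have h0 : 0 <= d / (2 * pi) + 2^-1 by rewrite addr_ge0 // ?divr_ge0 // ?ltW.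
have /andP[hn1 hn2] := truncn_itv h0.
set n := Num.Def.trunc _ in hn1 hn2.
pose c : R := 2 * pi * n%:R.
have hy : 0 < (pi : R) / 4 by rewrite divr_gt0.
have ezt : Complex (t - c) (pi / 4) + Complex c 0 = Complex t (pi / 4).
  by apply/eqP; rewrite eq_complex /= subrK addr0 !eqxx.
have hF2 : Fmu mu (Complex (t - c) (pi / 4)) = Fmu mu (Complex t (pi / 4)) - Complex c 0.
  by rewrite -ezt Fmu_shift // addrK.
have hbs : 0 < (pi / 4)^-1 * ms by rewrite mulr_gt0 // invr_gt0.
have hbt : 0 < (pi / 4)^-1 * mt by rewrite mulr_gt0 // invr_gt0.
have ab1 : \int[mu]_x uim (Complex s (pi / 4)) x <= - ((pi / 4)^-1 * ms).
  by rewrite -mulNr; exact: atom_bound.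
have ab2 : \int[mu]_x uim (Complex t (pi / 4)) x <= - ((pi / 4)^-1 * mt).
  by rewrite -mulNr; exact: atom_bound.
have [r1 [r2 [r3 r4]]] := inv_bounds (\int[mu]_x ure (Complex s (pi / 4)) x) _ _ hbs ab1.
have [u1 [u2 [u3 u4]]] := inv_bounds (\int[mu]_x ure (Complex t (pi / 4)) x) _ _ hbt ab2.
rewrite -GmuE -/(Fmu mu _) in r1 r2 r3 r4.
rewrite -GmuE -/(Fmu mu _) in u1 u2 u3 u4.
have eb : forall m : R, ((pi / 4)^-1 * m)^-1 = pi / 4 / m.
  by move=> m; rewrite invfM invrK mulrC.
rewrite eb in r1 r2 r3. rewrite eb in u1 u2 u3.
have G1nz : Gmu mu (Complex s (pi / 4)) != 0.
  rewrite GmuE; apply: cnz => /=; apply: ltr0_neq0.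
  by apply: (le_lt_trans ab1); rewrite oppr_lt0.
have F1nz : Fmu mu (Complex s (pi / 4)) != 0 by rewrite /Fmu invr_eq0.
have G2nz : Gmu mu (Complex (t - c) (pi / 4)) != 0.
  apply/eqP => hG.
  have : Fmu mu (Complex (t - c) (pi / 4)) = 0 by rewrite /Fmu hG invr0.
  rewrite hF2 => /eqP; rewrite subr_eq0 => /eqP hFt.
  by move: u4; rewrite hFt /= ltxx.
have F2nz : Fmu mu (Complex (t - c) (pi / 4)) != 0 by rewrite /Fmu invr_eq0.
have eG1 : Gmu mu (Complex s (pi / 4)) = (Fmu mu (Complex s (pi / 4)))^-1 by rewrite /Fmu invrK.
have eG2 : Gmu mu (Complex (t - c) (pi / 4)) = (Fmu mu (Complex (t - c) (pi / 4)))^-1.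
  by rewrite /Fmu invrK.
pose kC : R[i] := Complex (- pi^-1) 0.
have V := var_ge0 mu (Complex s (pi / 4)) (Complex (t - c) (pi / 4))
  (Fmu mu (Complex s (pi / 4)))
  ((kC^* * ((Complex s (pi / 4))^* - Complex (t - c) (pi / 4))) * Fmu mu (Complex (t - c) (pi / 4)))
  (1 + kC^* * ((Complex s (pi / 4))^* - Complex (t - c) (pi / 4))) hy hy.
rewrite eG1 eG2 Lin_spec // in V; try by apply: cdiff_nz.
rewrite [Fmu mu (Complex s _)]ceta [Fmu mu (Complex (t - c) _)]ceta /kC re_spec // in V.
rewrite hF2 Re_subC Im_subC in V.
have hc1 : c <= d + pi.
  have := ler_wpM2l (ltW h2p) hn1.
  by rewrite half_id.
have hc2 : d - pi < c.
  have hh : 2 * pi * (d / (2 * pi) + 2^-1) < 2 * pi * n.+1%:R by rewrite ltr_pM2l.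
  have e1 := half_id d _ hp.
  have e2 : 2 * pi * n.+1%:R = c + 2 * pi := ngen _ n.
  rewrite e1 e2 in hh; lra.
apply: (@final_arith _ pi d ms mt _ _ _ _ c (s - (t - c)) hp hdge hms hmt r3 r2 u3 u1 _ _ V).
  by rewrite /d; ring.
have : - pi <= s - (t - c) <= pi by apply/andP; split; rewrite /d in hc1 hc2; lra.
by move=> /andP[h1 h2]; rewrite !expr2; nra.
Qed.

Theorem corollary5p15 (R : realType) (mu : probability R R) (hL : in_L mu)
    (alpha beta : R) (hab : alpha != beta)
    (ha : (0 < mu [set alpha]%classic)%E) (hb : (0 < mu [set beta]%classic)%E) :
  (mine (mu [set alpha]%classic) (mu [set beta]%classic)
     < ((2 * pi) / `|alpha - beta|)%:E)%E.
Proof.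
case: (ltgtP alpha beta) => h.
- exact: main_aux.
- by rewrite minC distrC; exact: main_aux.
- by rewrite h eqxx in hab.
Qed.
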